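(* Let $d\ge1$, let $\{e^j\}_{j=1}^d$ be the standard basis of $\mathbb{R}^d$, let $\|\cdot\|_2$ be the Euclidean norm, $B_2=\{x\in\mathbb{R}^d:\|x\|_2\le1\}$, and $B^o_2(x)=\{y:\|y-x\|_2<1\}$. Define $x^j:=\frac{1}{2d}e^j$ for $j=1,\dots,d$ and $x^{d+1}:=-\frac{1}{2d}\sum_{j=1}^d e^j$. Then $$B_2\subset\bigcup_{j=1}^{d+1}B^o_2(x^j).$$ *)

(* Defs.v *)
From mathcomp Require Import all_boot all_order all_algebra.
From mathcomp Require Import reals.
Set Implicit Arguments. Unset Strict Implicit. Unset Printing Implicit Defensive.
Import Order.TTheory GRing.Theory Num.Theory.
Local Open Scope ring_scope.

Definition norm2 (R : realType) (d : nat) (x : 'rV[R]_d) : R :=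
  Num.sqrt (\sum_(i < d) x 0 i ^+ 2).

Definition ebasis (R : realType) (d : nat) (j : 'I_d) : 'rV[R]_d :=
  \row_(i < d) (if i == j then 1 else 0).

Definition B2 (R : realType) (d : nat) : pred 'rV[R]_d :=
  fun y => norm2 y <= 1.

Definition B2o (R : realType) (d : nat) (x : 'rV[R]_d) : pred 'rV[R]_d :=
  fun y => norm2 (y - x) < 1.

(* the centres x^1,...,x^{d+1}, indexed by 'I_(d+1): index j < d gives
   x^{j+1} = (1/(2d)) e^{j+1}; index d gives x^{d+1} = -(1/(2d)) sum_j e^j *)
Definition centre (R : realType) (d : nat) (j : 'I_d.+1) : 'rV[R]_d :=
  match unlift ord_max j with
  | Some j' => (2 * d%:R)^-1 *: ebasis R j'
  | None => - ((2 * d%:R)^-1 *: \sum_(j' < d) ebasis R j')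
  end.

(* Main.v *)
Require Import Defs.
From mathcomp Require Import all_boot all_order all_algebra.
From mathcomp Require Import reals.
From mathcomp Require Import ring lra.
Import Order.TTheory GRing.Theory Num.Theory.
Local Open Scope ring_scope.

Lemma sum_e (R : realType) d (c : R) (y : 'rV[R]_d) (j : 'I_d) :
  \sum_(i < d) (y - c *: ebasis R j) 0 i ^+ 2
  = \sum_(i < d) y 0 i ^+ 2 + (c ^+ 2 - 2 * c * y 0 j).
Proof.
rewrite (eq_bigr (fun i => y 0 i ^+ 2 + (if i == j then c ^+ 2 - 2 * c * y 0 i else 0))).
  by rewrite big_split /= -big_mkcond /= big_pred1_eq.
move=> i _; rewrite !mxE; case: eqP => [->|_]; ring.
Qed.

Lemma sum_last (R : realType) d (c : R) (y : 'rV[R]_d) :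
  \sum_(i < d) (y - - (c *: \sum_(j' < d) ebasis R j')) 0 i ^+ 2
  = \sum_(i < d) y 0 i ^+ 2 + 2 * c * \sum_(i < d) y 0 i + d%:R * c ^+ 2.
Proof.
rewrite (eq_bigr (fun i => y 0 i ^+ 2 + 2 * c * y 0 i + c ^+ 2)).
  by rewrite !big_split /= mulr_sumr sumr_const cardT size_enum_ord (mulr_natl (c ^+ 2)).
move=> i _; rewrite !mxE summxE.
rewrite (eq_bigr (fun k => if k == i then 1 else 0)); last first.
  by move=> k _; rewrite mxE eq_sym.
rewrite -big_mkcond /= big_pred1_eq; ring.
Qed.

Theorem proposition3p1 (R : realType) (d : nat) (hd : (1 <= d)%N)
  (y : 'rV[R]_d) :
  B2 y -> exists j : 'I_d.+1, B2o (centre R j) y.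
Proof.
rewrite /B2 /B2o /norm2 => Hy.
set s := \sum_(i < d) y 0 i ^+ 2 in Hy.
have s0 : 0 <= s by apply: sumr_ge0 => i _; apply: sqr_ge0.
have Hs : s <= 1 by rewrite -(ler_sqrt _ ler01) sqrtr1.
have lt1 : forall t : R, t < 1 -> Num.sqrt t < 1.
  by move=> t ht; rewrite -sqrtr1 ltr_sqrt.
set n : R := d%:R.
have n1 : 1 <= n by rewrite /n ler1n.
set c : R := (2 * n)^-1.
have cn : c * n = 1 / 2 by rewrite /c; field; lra.
have c0 : 0 < c by rewrite /c invr_gt0; lra.
have c12 : c <= 1 / 2 by nra.
case: (boolP [exists j : 'I_d, c / 2 < y 0 j]) => [/existsP [j Hj]|Hall].
  exists (lift ord_max j); rewrite /centre liftK.
  apply: lt1; rewrite sum_e -/s -/c; nra.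
set S := \sum_(i < d) y 0 i.
have Hle : forall i : 'I_d, y 0 i <= c / 2.
  move=> i; rewrite leNgt; apply/negP => h; move/negP: Hall; apply; by apply/existsP; exists i.
exists ord_max; rewrite /centre unlift_none.
have E := sum_last _ _ c y; rewrite -/s -/S -/n in E.
rewrite -/c E.
have nc2 : n * c ^+ 2 = c / 2 by rewrite expr2 mulrA (mulrC n) cn; field.
case: (ltrP S (-(1/4))) => HS.
  apply: lt1; nra.
set P := n * (c / 2) - S.
have P0 : 0 <= P.
  rewrite /P subr_ge0.
  have : S <= \sum_(i < d) (c / 2) by apply: ler_sum => i _; exact: Hle.
  by rewrite sumr_const cardT size_enum_ord /n (mulr_natl (c / 2) d).
have Hp : forall i : 'I_d, c / 2 - y 0 i <= P.
  move=> i.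
  have : \sum_(k < d) (c / 2 - y 0 k) = P.
    by rewrite /P sumrB sumr_const cardT size_enum_ord /n (mulr_natl (c / 2) d).
  move=> <-; rewrite (bigD1 i) //= lerDl; apply: sumr_ge0 => k _.
  by rewrite subr_ge0 Hle.
have Hs2 : s <= n * (c / 2) ^+ 2 + P * P.
  have : s <= \sum_(i < d) ((c / 2) ^+ 2 + P * (c / 2 - y 0 i)).
    apply: ler_sum => i _.
    have := Hp i; have := Hle i; nra.
  rewrite big_split /= sumr_const cardT size_enum_ord -mulr_sumr sumrB sumr_const cardT size_enum_ord.
  by rewrite /P /n (mulr_natl ((c / 2) ^+ 2) d) (mulr_natl (c / 2) d).
have nc4 : n * (c / 2) = 1 / 4 by rewrite mulrA (mulrC n) cn; field.
have P12 : P <= 1 / 2 by rewrite /P; lra.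
have nc8 : n * (c / 2) ^+ 2 = c / 8.
  by rewrite expr2 mulrA nc4; field.
have PP : P * P <= 1 / 4 by nra.
have SP : S = 1 / 4 - P by rewrite /P nc4; ring.
have S4 : S <= 1 / 4 by lra.
have cS : c * S <= c / 4 by nra.
apply: lt1; lra.
Qed.
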